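(* Let $(X,d)$ be a compact metric space and let $f\colon X\to X$ be a continuous map with the limit shadowing property. Then for every $x\in\Omega(f)$ and every $\epsilon>0$ there exists $y\in\Omega(f)$ with $d(x,y)<\epsilon$ such that either $y$ is a periodic point of $f$, or $f|_{\overline{O_f(y)}}\colon\overline{O_f(y)}\to\overline{O_f(y)}$ is topologically conjugate to an odometer, where $O_f(y)=\{f^n(y):n\ge0\}$.
   Context: $f$ has the limit shadowing property if for every sequence $(x_i)_{i\ge0}$ in $X$ with $\lim_{i\to\infty}d(f(x_i),x_{i+1})=0$ there is $y\in X$ with $\lim_{i\to\infty}d(x_i,f^i(y))=0$. $\Omega(f)$ is the set of non-wandering points: $x$ such that for every neighborhood $U$ of $x$ there is $n>0$ with $f^n(U)\cap U\ne\emptyset$. An odometer: given a strictly increasing sequence $m=(m_k)_{k\ge1}$ of positive integers with $m_1\ge2$ and $m_k\mid m_{k+1}$ for all $k$, let $X_m=\{(x_k)_{k\ge1}\in\prod_{k\ge1}\{0,\dots,m_k-1\}: x_k\equiv x_{k+1}\pmod{m_k}\ \forall k\}$ with the product topology (discrete factors), and $g\colon X_m\to X_m$, $g(x)_k=x_k+1\pmod{m_k}$. *)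

(* Defs.v *)
From Stdlib Require Import Reals List Arith.
Open Scope R_scope.

Definition is_metric {X : Type} (d : X -> X -> R) : Prop :=
  (forall x y, 0 <= d x y) /\
  (forall x y, d x y = 0 <-> x = y) /\
  (forall x y, d x y = d y x) /\
  (forall x y z, d x z <= d x y + d y z).

Definition is_open {X : Type} (d : X -> X -> R) (U : X -> Prop) : Prop :=
  forall x, U x -> exists r, r > 0 /\ forall y, d x y < r -> U y.

Definition metric_compact {X : Type} (d : X -> X -> R) : Prop :=
  forall (I : Type) (U : I -> X -> Prop),
    (forall i, is_open d (U i)) ->
    (forall x, exists i, U i x) ->
    exists l : list I, forall x, exists i, In i l /\ U i x.

Definition metric_continuous {X : Type} (d : X -> X -> R) (f : X -> X) : Prop :=
  forall x eps, eps > 0 -> exists delta, delta > 0 /\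
    forall y, d x y < delta -> d (f x) (f y) < eps.

Definition iter {X : Type} (f : X -> X) (n : nat) (x : X) : X := Nat.iter n f x.

Definition limit_shadowing {X : Type} (d : X -> X -> R) (f : X -> X) : Prop :=
  forall xs : nat -> X,
    Un_cv (fun i => d (f (xs i)) (xs (S i))) 0 ->
    exists y, Un_cv (fun i => d (xs i) (iter f i y)) 0.

Definition nonwandering {X : Type} (d : X -> X -> R) (f : X -> X) (x : X) : Prop :=
  forall U : X -> Prop, is_open d U -> U x ->
    exists n, (n > 0)%nat /\ exists z, U z /\ U (iter f n z).

Definition periodic {X : Type} (f : X -> X) (y : X) : Prop :=
  exists n, (n > 0)%nat /\ iter f n y = y.

Definition orbit_closure {X : Type} (d : X -> X -> R) (f : X -> X) (y z : X) : Prop :=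
  forall eps, eps > 0 -> exists n, d z (iter f n y) < eps.

(* Odometers. The sequence (m_k)_{k>=1} is indexed from 0 here: m 0 = m_1. *)
Definition odometer_seq (m : nat -> nat) : Prop :=
  (2 <= m 0)%nat /\ forall k, (m k < m (S k))%nat /\ Nat.divide (m k) (m (S k)).

Definition in_odometer (m : nat -> nat) (x : nat -> nat) : Prop :=
  forall k, (x k < m k)%nat /\ Nat.modulo (x (S k)) (m k) = x k.

Definition odometer_map (m : nat -> nat) (x : nat -> nat) : nat -> nat :=
  fun k => Nat.modulo (x k + 1) (m k).

(* f restricted to K = closure(O_f(y)) is topologically conjugate to the odometer
   (X_m, g): there is a homeomorphism h : K -> X_m (X_m with the product of
   discrete topologies, whose basic neighbourhoods of p are the cylinders
   {q | q_k = p_k for k < N}) with h o f = g o h on K.  Points of X_m are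
   compared pointwise (extensional equality of sequences). *)
Definition conj_to_odometer {X : Type} (d : X -> X -> R) (f : X -> X) (y : X)
    (m : nat -> nat) : Prop :=
  let K := orbit_closure d f y in
  exists h : X -> (nat -> nat),
    (forall z, K z -> in_odometer m (h z)) /\
    (forall p, in_odometer m p -> exists z, K z /\ forall k, h z k = p k) /\
    (forall z w, K z -> K w -> (forall k, h z k = h w k) -> z = w) /\
    (* h continuous on K *)
    (forall z N, K z -> exists delta, delta > 0 /\
       forall w, K w -> d z w < delta -> forall k, (k < N)%nat -> h w k = h z k) /\
    (* h^{-1} continuous on X_m *)
    (forall z eps, K z -> eps > 0 -> exists N,
       forall w, K w -> (forall k, (k < N)%nat -> h w k = h z k) -> d z w < eps) /\
    (forall z, K z -> forall k, h (f z) k = odometer_map m (h z) k).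

(* Main.v *)
Require Import Defs.
From Stdlib Require Import Reals List Arith Lia Lra Classical ClassicalEpsilon.
Open Scope R_scope.

Section S.
Variable X : Type.
Variable d : X -> X -> R.
Variable f : X -> X.
Hypothesis Hd : is_metric d.
Hypothesis HX : metric_compact d.
Hypothesis Hf : metric_continuous d f.

Lemma dpos : forall x y, 0 <= d x y.
Proof. destruct Hd as [H _]; auto. Qed.
Lemma d0 : forall x, d x x = 0.
Proof. destruct Hd as [_ [H _]]; intros; apply H; auto. Qed.
Lemma deq : forall x y, d x y = 0 -> x = y.
Proof. destruct Hd as [_ [H _]]; intros; apply H; auto. Qed.
Lemma dsym : forall x y, d x y = d y x.
Proof. destruct Hd as [_ [_ [H _]]]; auto. Qed.
Lemma dtri : forall x y z, d x z <= d x y + d y z.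
Proof. destruct Hd as [_ [_ [_ H]]]; auto. Qed.

Lemma le_eps : forall a b, (forall e, e > 0 -> a < b + e) -> a <= b.
Proof.
  intros a b H. destruct (Rle_or_lt a b) as [h|h]; auto.
  specialize (H ((a - b)/2) ltac:(lra)). lra.
Qed.

Lemma d_small_eq : forall x y, (forall e, e > 0 -> d x y < e) -> x = y.
Proof.
  intros x y H. apply deq. apply Rle_antisym; [|apply dpos].
  apply le_eps. intros e he. specialize (H e he). lra.
Qed.

Lemma iter_S : forall (g : X -> X) n x, iter g (S n) x = g (iter g n x).
Proof. reflexivity. Qed.
Lemma iter_add : forall (g : X -> X) a b x, iter g (a + b) x = iter g a (iter g b x).
Proof. intros. unfold iter. apply Nat.iter_add. Qed.
Lemma iter_Sr : forall (g : X -> X) n x, iter g (S n) x = iter g n (g x).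
Proof.
  intros. replace (S n) with (n + 1)%nat by lia. rewrite iter_add. reflexivity.
Qed.
Lemma iter_mul : forall p j x, iter (iter f p) j x = iter f (j * p) x.
Proof.
  intros p j x. induction j; [reflexivity|].
  rewrite iter_S, IHj. simpl (S j * p)%nat. rewrite iter_add. reflexivity.
Qed.

Lemma cont_iter_g : forall g, metric_continuous d g -> forall n, metric_continuous d (iter g n).
Proof.
  intros g Hg n. induction n.
  - intros x e he. exists e. split; auto.
  - intros x e he. destruct (Hg (iter g n x) e he) as [d1 [hd1 H1]].
    destruct (IHn x d1 hd1) as [d2 [hd2 H2]].
    exists d2. split; auto. intros y hy. rewrite !iter_S. apply H1. apply H2. auto.
Qed.

Lemma cont_iter : forall n, metric_continuous d (iter f n).
Proof. apply cont_iter_g; auto. Qed.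

Lemma list_max_bound : forall (A : Type) (g : A -> nat) (l : list A),
  exists M, forall a, In a l -> (g a <= M)%nat.
Proof.
  intros A g l. induction l as [|a l [M HM]].
  - exists 0%nat. intros a [].
  - exists (Nat.max (g a) M). intros b [<-|hb]; [lia|]. specialize (HM b hb). lia.
Qed.

Lemma cluster : forall s : nat -> X, exists c, forall e, e > 0 -> forall N, exists n, (n >= N)%nat /\ d c (s n) < e.
Proof.
  intros s. apply NNPP. intro Hn.
  assert (H : forall c, exists e N, e > 0 /\ forall n, (n >= N)%nat -> e <= d c (s n)).
  { intro c. apply NNPP. intro H1. apply Hn. exists c. intros e he N.
    apply NNPP. intro H2. apply H1. exists e, N. split; auto. intros n hn.
    apply Rnot_lt_le. intro h3. apply H2. exists n. auto. }
  set (U := fun (i : X * R * nat) (w : X) => let '(c, e, N) := i in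
              d c w < e /\ e > 0 /\ forall n, (n >= N)%nat -> e <= d c (s n)).
  destruct (HX _ U) as [l Hl].
  - intros [[c e] N] w [h1 [h2 h3]]. exists (e - d c w). split; [lra|].
    intros y hy. simpl. repeat split; auto. pose proof (dtri c w y). lra.
  - intros w. destruct (H w) as [e [N [he HN]]]. exists (w, e, N). simpl.
    rewrite d0. auto.
  - destruct (list_max_bound _ (fun i : X * R * nat => let '(_, _, N) := i in N) l) as [M HM].
    destruct (Hl (s M)) as [[[c e] N] [hin [h1 [h2 h3]]]].
    specialize (HM _ hin). simpl in HM. specialize (h3 M ltac:(lia)). lra.
Qed.

Lemma net : forall r, r > 0 -> exists l : list X, forall w, exists c, In c l /\ d c w < r.
Proof.
  intros r hr. destruct (HX X (fun c w => d c w < r)) as [l Hl].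
  - intros c w hw. exists (r - d c w). split; [lra|]. intros y hy.
    pose proof (dtri c w y). lra.
  - intros w. exists w. rewrite d0. auto.
  - exists l. auto.
Qed.

Definition closedS (Z : X -> Prop) := forall c, (forall e, e > 0 -> exists w, Z w /\ d c w < e) -> Z c.

Lemma cluster_in_closed : forall (Z : X -> Prop) (s : nat -> X) c N,
  closedS Z -> (forall n, (n >= N)%nat -> Z (s n)) ->
  (forall e, e > 0 -> forall N, exists n, (n >= N)%nat /\ d c (s n) < e) -> Z c.
Proof.
  intros Z s c N HZ Hs Hc. apply HZ. intros e he. destruct (Hc e he N) as [n [hn h]].
  exists (s n). auto.
Qed.


Hypothesis Hls : limit_shadowing d f.

Definition Good (b : X) (g e : R) : Prop :=
  forall (c : nat -> X) (L : nat), (L >= 1)%nat -> c 0%nat = b -> c L = b ->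
    (forall i, (i < L)%nat -> d (f (c i)) (c (S i)) < e) ->
    exists z, forall i, (i <= L)%nat -> d (iter f i z) (c i) < g.

Fixpoint pos (L : nat -> nat) (t : nat) : nat * nat :=
  match t with
  | O => (O, O)
  | S t' => let (n, i) := pos L t' in if S i <? L n then (n, S i) else (S n, O)
  end.

Section Pos.
Variable L : nat -> nat.
Hypothesis HL : forall n, (L n >= 1)%nat.

Lemma pos_inv : forall t, (snd (pos L t) < L (fst (pos L t)))%nat.
Proof.
  induction t; simpl. - specialize (HL 0%nat); lia.
  - destruct (pos L t) as [n i]. simpl in IHt.
    destruct (S i <? L n) eqn:E; simpl.
    + apply Nat.ltb_lt in E; auto.
    + specialize (HL (S n)); lia.
Qed.

Lemma pos_step_fst : forall t, (fst (pos L t) <= fst (pos L (S t)) <= S (fst (pos L t)))%nat.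
Proof.
  intros t; simpl. destruct (pos L t) as [n i]. destruct (S i <? L n); simpl; lia.
Qed.

Lemma pos_mono : forall t k, (fst (pos L t) <= fst (pos L (k + t)))%nat.
Proof.
  intros t k; induction k; [simpl; lia|]. pose proof (pos_step_fst (k + t)).
  replace (S k + t)%nat with (S (k + t)) by lia. lia.
Qed.

Lemma pos_le : forall t, (fst (pos L t) <= t)%nat.
Proof.
  induction t; [simpl; lia|]. pose proof (pos_step_fst t). lia.
Qed.

Lemma pos_run : forall t n, pos L t = (n, O) -> forall i, (i < L n)%nat -> pos L (i + t) = (n, i).
Proof.
  intros t n Ht i. induction i; intros hi; simpl; auto.
  rewrite IHi by lia. replace (S i <? L n) with true; auto. symmetry; apply Nat.ltb_lt; auto.
Qed.

Lemma pos_next : forall t n, pos L t = (n, O) -> pos L (L n + t) = (S n, O).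
Proof.
  intros t n Ht. specialize (HL n) as Hn.
  replace (L n + t)%nat with (S ((L n - 1) + t)) by lia. simpl.
  rewrite (pos_run t n Ht (L n - 1)) by lia.
  replace (S (L n - 1) <? L n) with false; auto. symmetry; apply Nat.ltb_ge; lia.
Qed.

Lemma pos_start : forall n, exists t, pos L t = (n, O).
Proof.
  induction n. - exists O; reflexivity.
  - destruct IHn as [t Ht]. exists (L n + t)%nat. apply pos_next; auto.
Qed.
End Pos.

Lemma inv_small : forall e, e > 0 -> exists N, / (INR N + 1) < e.
Proof.
  intros e he. destruct (archimed_cor1 e he) as [N [h1 h2]]. exists N.
  apply Rle_lt_trans with (/ INR N); auto. apply Rlt_le, Rinv_lt_contravar.
  - apply lt_0_INR in h2. nra.
  - lra.
Qed.

Lemma Good_mono : forall b g e e', e' <= e -> Good b g e -> Good b g e'.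
Proof.
  intros b g e e' he H c L h1 h2 h3 h4. apply H; auto. intros i hi. specialize (h4 i hi). lra.
Qed.

Lemma T_lemma : forall b g, g > 0 -> exists e, e > 0 /\ e <= g /\ Good b g e.
Proof.
  intros b g hg.
  assert (exists e, e > 0 /\ Good b g e) as [e [he HG]].
  2:{ exists (Rmin e g). repeat split. - apply Rmin_glb_lt; auto. - apply Rmin_r.
      - apply Good_mono with e; auto. apply Rmin_l. }
  apply NNPP. intro Hn.
  assert (Hbad : forall n : nat, exists cL : (nat -> X) * nat,
     (snd cL >= 1)%nat /\ fst cL 0%nat = b /\ fst cL (snd cL) = b /\
     (forall i, (i < snd cL)%nat -> d (f (fst cL i)) (fst cL (S i)) < / (INR n + 1)) /\
     forall z, exists i, (i <= snd cL)%nat /\ g <= d (iter f i z) (fst cL i)).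
  { intro n. apply NNPP. intro H1. apply Hn. exists (/ (INR n + 1)). split.
    { apply Rinv_0_lt_compat. pose proof (pos_INR n). lra. }
    intros c L h1 h2 h3 h4. apply NNPP. intro H2. apply H1. exists (c, L). simpl.
    repeat split; auto. intro z. apply NNPP. intro H3. apply H2. exists z. intros i hi.
    apply Rnot_le_lt. intro H4. apply H3. exists i. auto. }
  set (CL := fun n => proj1_sig (constructive_indefinite_description _ (Hbad n))).
  assert (HCL : forall n, let cL := CL n in
     (snd cL >= 1)%nat /\ fst cL 0%nat = b /\ fst cL (snd cL) = b /\
     (forall i, (i < snd cL)%nat -> d (f (fst cL i)) (fst cL (S i)) < / (INR n + 1)) /\
     forall z, exists i, (i <= snd cL)%nat /\ g <= d (iter f i z) (fst cL i)).
  { intro n. unfold CL. apply (proj2_sig (constructive_indefinite_description _ (Hbad n))). }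
  clearbody CL.
  set (C := fun n => fst (CL n)). set (L := fun n => snd (CL n)).
  assert (HL : forall n, (L n >= 1)%nat) by (intro n; apply (HCL n)).
  set (xi := fun t => let (n, i) := pos L t in C n i).
  assert (Herr : forall t, d (f (xi t)) (xi (S t)) < / (INR (fst (pos L t)) + 1)).
  { intro t. unfold xi. pose proof (pos_inv L HL t) as Hinv. simpl pos.
    destruct (pos L t) as [n i]. simpl in *.
    destruct (HCL n) as [_ [h0 [hL [herr _]]]].
    destruct (S i <? L n) eqn:E.
    - apply herr. auto.
    - apply Nat.ltb_ge in E. assert (S i = L n) by lia.
      destruct (HCL (S n)) as [_ [h0' _]]. unfold C. rewrite h0'.
      rewrite <- hL. fold (L n). rewrite <- H. apply herr. auto. }
  destruct (Hls xi) as [y Hy].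
  { intros e' he'. destruct (inv_small e' he') as [N HN].
    destruct (pos_start L HL N) as [tN HtN]. exists tN. intros t ht.
    unfold R_dist. rewrite Rminus_0_r. rewrite Rabs_pos_eq by apply dpos.
    eapply Rlt_le_trans; [apply Herr|]. apply Rle_trans with (/ (INR N + 1)); [|lra].
    apply Rinv_le_contravar. pose proof (pos_INR N); lra.
    apply Rplus_le_compat_r, le_INR.
    pose proof (pos_mono L tN (t - tN)). replace (t - tN + tN)%nat with t in H by lia.
    rewrite HtN in H. simpl in H. auto. }
  destruct (Hy g hg) as [T0 HT0].
  destruct (pos_start L HL T0) as [t0 Ht0].
  assert (ht0 : (t0 >= T0)%nat). { pose proof (pos_le L t0). rewrite Ht0 in H. simpl in H. lia. }
  destruct (HCL T0) as [_ [h0 [hL [_ Hz]]]].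
  destruct (Hz (iter f t0 y)) as [i [hi Hi]].
  rewrite <- iter_add in Hi.
  assert (Hxi : xi (i + t0)%nat = fst (CL T0) i).
  { unfold xi. destruct (Nat.lt_ge_cases i (L T0)) as [h|h].
    - rewrite (pos_run L t0 T0 Ht0 i h). reflexivity.
    - assert (i = L T0) by (unfold L in *; lia). subst i.
      rewrite (pos_next L HL t0 T0 Ht0).
      destruct (HCL (S T0)) as [_ [h0' _]]. unfold C. rewrite h0'. unfold L. rewrite hL. reflexivity. }
  specialize (HT0 (i + t0)%nat ltac:(lia)). unfold R_dist in HT0.
  rewrite Rminus_0_r, Rabs_pos_eq in HT0 by apply dpos.
  rewrite Hxi, dsym in HT0. lra.
Qed.

Lemma mod_mod_div : forall a b c, Nat.divide c b -> ((a mod b) mod c = a mod c)%nat.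
Proof.
  intros a b c [t ->].
  rewrite (Nat.div_mod_eq a (t * c)%nat) at 2.
  set (q := (a / (t * c))%nat).
  replace (t * c * q + a mod (t * c))%nat with (a mod (t * c) + (t * q) * c)%nat by ring.
  rewrite Nat.Div0.mod_add. reflexivity.
Qed.

Definition Per (P : nat -> X) (p : nat) := forall i, P i = P (i mod p).

Lemma trace_inf : forall b g e P p, Good b g e -> (p >= 1)%nat -> Per P p -> P 0%nat = b ->
  (forall i, d (f (P i)) (P (S i)) < e) ->
  exists z, forall i, d (iter f i z) (P i) <= g.
Proof.
  intros b g e P p HG hp HP h0 herr.
  assert (H : forall N : nat, exists z, forall i, (i <= S N * p)%nat -> d (iter f i z) (P i) < g).
  { intro N. apply HG; auto. - nia.
    - rewrite HP, Nat.Div0.mod_mul; auto. }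
  set (zs := fun N => proj1_sig (constructive_indefinite_description _ (H N))).
  assert (Hzs : forall N i, (i <= S N * p)%nat -> d (iter f i (zs N)) (P i) < g).
  { intros N. exact (proj2_sig (constructive_indefinite_description _ (H N))). }
  clearbody zs. destruct (cluster zs) as [c Hc]. exists c. intro i.
  apply le_eps. intros e' he'. destruct (cont_iter i c e' he') as [th [hth Hth]].
  destruct (Hc th hth i) as [n [hn hcn]].
  specialize (Hzs n i ltac:(nia)). specialize (Hth _ hcn).
  pose proof (dtri (iter f i c) (iter f i (zs n)) (P i)). lra.
Qed.

Lemma trace_closed : forall g P, closedS (fun z => forall i, d (iter f i z) (P i) <= g).
Proof.
  intros g P c Hc i. apply le_eps. intros e he.
  destruct (cont_iter i c e he) as [th [hth Hth]].
  destruct (Hc th hth) as [w [Hw hw]]. specialize (Hth _ hw). specialize (Hw i).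
  pose proof (dtri (iter f i c) (iter f i w) (P i)). lra.
Qed.

Definition Av (g : X -> X) (c : X) (r : R) (w : X) := forall j, r <= d c (iter g j w).
Definition refineS (g : X -> X) (M : X -> Prop) (c : X) (r : R) : X -> Prop :=
  fun w => M w /\ ((exists u, M u /\ Av g c r u) -> Av g c r w).
Definition foldS (g : X -> X) (r : R) (l : list X) (M : X -> Prop) : X -> Prop :=
  fold_left (fun M c => refineS g M c r) l M.
Fixpoint Mseq (g : X -> X) (netf : nat -> list X) (Z : X -> Prop) (m : nat) : X -> Prop :=
  match m with
  | O => Z
  | S m' => foldS g (/ (INR m' + 1)) (netf m') (Mseq g netf Z m')
  end.

Definition GoodSet (g : X -> X) (M : X -> Prop) :=
  closedS M /\ (exists z, M z) /\ (forall z, M z -> M (g z)).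

Section Birk.
Variable g : X -> X.
Hypothesis Hg : metric_continuous d g.

Lemma Av_closed : forall c r, closedS (Av g c r).
Proof.
  intros c r c0 H j. apply Rnot_lt_le. intro hlt.
  destruct (cont_iter_g g Hg j c0 (r - d c (iter g j c0)) ltac:(lra)) as [th [hth Hth]].
  destruct (H th hth) as [w [Hw hw]]. specialize (Hth _ hw). specialize (Hw j).
  pose proof (dtri c (iter g j c0) (iter g j w)). lra.
Qed.

Lemma Av_inv : forall c r w, Av g c r w -> Av g c r (g w).
Proof. intros c r w H j. rewrite <- iter_Sr. apply H. Qed.

Lemma refine_good : forall M c r, GoodSet g M -> GoodSet g (refineS g M c r).
Proof.
  intros M c r [HC [HN HI]]. split; [|split].
  - intros c0 H. split.
    + apply HC. intros e he. destruct (H e he) as [w [[Hw _] hw]]. eauto.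
    + intros HE. apply Av_closed. intros e he. destruct (H e he) as [w [[_ Hw] hw]]. eauto.
  - destruct (classic (exists u, M u /\ Av g c r u)) as [[u [h1 h2]]|hn].
    + exists u. split; auto.
    + destruct HN as [z hz]. exists z. split; auto. intro h; contradiction.
  - intros z [h1 h2]. split; auto. intros HE. apply Av_inv; auto.
Qed.

Lemma fold_props : forall r l M, GoodSet g M ->
  GoodSet g (foldS g r l M) /\ (forall w, foldS g r l M w -> M w) /\
  (forall c, In c l -> (forall w, foldS g r l M w -> Av g c r w) \/
                       (forall w, foldS g r l M w -> ~ Av g c r w)).
Proof.
  intros r l. induction l as [|c l IH]; intros M HM.
  - unfold foldS; simpl. split; [auto|]. split; [auto|]. intros c [].
  - unfold foldS. simpl. fold (foldS g r l (refineS g M c r)).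
    destruct (IH (refineS g M c r) (refine_good M c r HM)) as [h1 [h2 h3]].
    split; auto. split.
    + intros w hw. apply h2 in hw. apply hw.
    + intros c' [Heq|hin]; [|auto]. subst c'.
      destruct (classic (exists u, M u /\ Av g c r u)) as [HE|HE].
      * left. intros w hw. apply h2 in hw. apply hw. auto.
      * right. intros w hw hav. apply h2 in hw. apply HE. exists w. split; auto. apply hw.
Qed.

Lemma birkhoff : forall Z, GoodSet g Z ->
  exists v, Z v /\ forall e, e > 0 -> exists j, (j >= 1)%nat /\ d (iter g j v) v < e.
Proof.
  intros Z HZ.
  assert (Hnet : forall m : nat, exists l : list X, forall w, exists c, In c l /\ d c w < / (INR m + 1)).
  { intro m. apply net. apply Rinv_0_lt_compat. pose proof (pos_INR m). lra. }
  set (netf := fun m => proj1_sig (constructive_indefinite_description _ (Hnet m))).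
  assert (Hnetf : forall m w, exists c, In c (netf m) /\ d c w < / (INR m + 1)).
  { intro m. exact (proj2_sig (constructive_indefinite_description _ (Hnet m))). }
  clearbody netf.
  set (Ms := Mseq g netf Z).
  assert (HMs : forall m, GoodSet g (Ms m)).
  { induction m; simpl; auto. apply fold_props; auto. }
  assert (Hdec : forall m k w, Ms (k + m)%nat w -> Ms m w).
  { intros m k. induction k; intros w hw; auto. apply IHk.
    simpl in hw. apply (fold_props _ _ _ (HMs (k + m)%nat)) in hw. auto. }
  assert (Hne : forall m, exists w, Ms m w) by (intro m; apply HMs).
  set (ws := fun m => proj1_sig (constructive_indefinite_description _ (Hne m))).
  assert (Hws : forall m, Ms m (ws m)).
  { intro m. exact (proj2_sig (constructive_indefinite_description _ (Hne m))). }
  clearbody ws.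
  destruct (cluster ws) as [v Hv].
  assert (Hvin : forall m, Ms m v).
  { intro m. apply (cluster_in_closed (Ms m) ws v m); auto.
    - apply HMs.
    - intros n hn. apply (Hdec m (n - m)%nat). replace (n - m + m)%nat with n by lia. auto. }
  exists v. split; [apply (Hvin 0%nat)|].
  intros e he. destruct (inv_small (e / 2) ltac:(lra)) as [m Hm].
  destruct (Hnetf m v) as [c [hc hcv]].
  assert (Hgv : Ms (S m) (g v)) by (apply HMs; auto).
  destruct (proj2 (proj2 (fold_props (/ (INR m + 1)) (netf m) (Ms m) (HMs m))) c hc) as [HA|HA].
  - exfalso. specialize (HA v (Hvin (S m)) 0%nat). simpl in HA. lra.
  - specialize (HA (g v) Hgv). apply NNPP. intro Hn. apply HA. intro j.
    apply Rnot_lt_le. intro hj. apply Hn. exists (S j). split; [lia|].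
    rewrite iter_Sr. pose proof (dtri (iter g j (g v)) c v). rewrite dsym in hj. lra.
Qed.
End Birk.

Lemma mod_succ : forall i n, (n >= 1)%nat ->
  ((S (i mod n) < n)%nat -> (S i mod n = S (i mod n))%nat) /\
  (S (i mod n) = n -> (S i mod n = 0)%nat).
Proof.
  intros i n hn. pose proof (Nat.div_mod_eq i n) as E.
  set (q := (i / n)%nat) in *. set (r := (i mod n)%nat) in *.
  replace (S i) with (S r + q * n)%nat by lia. rewrite Nat.Div0.mod_add.
  split; intro H. - apply Nat.mod_small; auto. - rewrite H. apply Nat.Div0.mod_same.
Qed.

Record stage := mkStage { sP : nat -> X; sp : nat; sg : R; se : R }.

Definition valid (s : stage) : Prop :=
  (sp s >= 1)%nat /\ Per (sP s) (sp s) /\ sg s > 0 /\ se s > 0 /\ se s <= sg s /\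
  Good (sP s 0%nat) (sg s) (se s) /\ (forall i, d (f (sP s i)) (sP s (S i)) < se s).

Definition srel (s s' : stage) : Prop :=
  Nat.divide (sp s) (sp s') /\ sg s' = sg s / 2 /\ (forall i, d (sP s' i) (sP s i) <= sg s).

Lemma next_stage : forall s, valid s -> exists s', valid s' /\ srel s s'.
Proof.
  intros [P p g e] [hp [HP [hg [he [heg [HG Herr]]]]]]. simpl in *.
  set (Z := fun z => forall i, d (iter f i z) (P i) <= g).
  assert (HZ : GoodSet (iter f p) Z).
  { split; [apply trace_closed|split].
    - apply (trace_inf (P 0%nat) g e P p); auto.
    - intros z hz i. rewrite <- iter_add. rewrite (HP i).
      replace (i mod p)%nat with ((i + p) mod p)%nat. rewrite <- HP. apply hz.
      replace (i + p)%nat with (i + 1 * p)%nat by lia. apply Nat.Div0.mod_add. }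
  destruct (birkhoff (iter f p) (cont_iter p) Z HZ) as [v [Hv Hrec]].
  destruct (T_lemma v (g / 2) ltac:(lra)) as [e' [he' [he'g HG']]].
  destruct (Hrec e' he') as [j [hj Hj]]. rewrite iter_mul in Hj.
  set (p' := (j * p)%nat).
  exists (mkStage (fun i => iter f (i mod p') v) p' (g / 2) e').
  assert (hp' : (p' >= 1)%nat) by (unfold p'; nia).
  split; [split; [|split; [|split; [|split; [|split; [|split]]]]]|]; simpl; auto; try lra.
  - intro i. rewrite Nat.Div0.mod_mod. reflexivity.
  - rewrite Nat.Div0.mod_0_l. exact HG'.
  - intro i. destruct (mod_succ i p' hp') as [h1 h2].
    pose proof (Nat.mod_upper_bound i p' ltac:(lia)).
    destruct (Nat.lt_ge_cases (S (i mod p')) p') as [h|h].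
    + rewrite (h1 h), <- iter_S, d0. auto.
    + rewrite h2 by lia. simpl (iter f 0 v).
      rewrite <- iter_S. replace (S (i mod p')) with p' by lia. auto.
  - split; [|split]; auto.
    + exists j. reflexivity.
    + intro i. simpl. rewrite (HP i). rewrite <- (mod_mod_div i p' p) by (exists j; reflexivity).
      rewrite <- HP. apply Hv.
Qed.

Lemma dep_choice : forall (A : Type) (Pr : A -> Prop) (Rl : A -> A -> Prop) a0, Pr a0 ->
  (forall a, Pr a -> exists b, Pr b /\ Rl a b) ->
  exists sq : nat -> A, sq 0%nat = a0 /\ forall k, Pr (sq k) /\ Rl (sq k) (sq (S k)).
Proof.
  intros A Pr Rl a0 h0 H.
  set (F := fun (s : {a | Pr a}) =>
    let c := constructive_indefinite_description _ (H (proj1_sig s) (proj2_sig s)) in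
    exist Pr (proj1_sig c) (proj1 (proj2_sig c))).
  assert (HF : forall s, Rl (proj1_sig s) (proj1_sig (F s))).
  { intro s. unfold F. simpl.
    exact (proj2 (proj2_sig (constructive_indefinite_description _ (H (proj1_sig s) (proj2_sig s))))). }
  exists (fun k => proj1_sig (Nat.iter k F (exist Pr a0 h0))). split; [reflexivity|].
  intro k. split; [apply proj2_sig|]. simpl. apply HF.
Qed.

Lemma initial_stage : forall x, nonwandering d f x -> forall g, g > 0 ->
  exists s, valid s /\ sP s 0%nat = x /\ sg s = g.
Proof.
  intros x Hx g hg. destruct (T_lemma x g hg) as [e [he [heg HG]]].
  destruct (Hf x (e / 2) ltac:(lra)) as [th [hth Hth]].
  set (r := Rmin th (e / 2)).
  assert (hr : r > 0) by (apply Rmin_glb_lt; lra).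
  destruct (Hx (fun w => d x w < r)) as [n [hn [z [hz1 hz2]]]].
  { intros w hw. exists (r - d x w). split; [lra|]. intros y hy. pose proof (dtri x w y). lra. }
  { rewrite d0. auto. }
  assert (hzth : d x z < th) by (pose proof (Rmin_l th (e/2)); unfold r in *; lra).
  assert (hzn : d x (iter f n z) < e / 2) by (pose proof (Rmin_r th (e/2)); unfold r in *; lra).
  set (P := fun i => if (i mod n =? 0)%nat then x else iter f (i mod n) z).
  exists (mkStage P n g e). simpl.
  assert (HP0 : P 0%nat = x) by (unfold P; rewrite Nat.Div0.mod_0_l; reflexivity).
  split; [split; [|split; [|split; [|split; [|split; [|split]]]]]|]; simpl; auto; try lra.
  - intro i. unfold P. rewrite Nat.Div0.mod_mod. reflexivity.
  - rewrite HP0; auto.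
  - intro i. destruct (mod_succ i n ltac:(lia)) as [h1 h2].
    pose proof (Nat.mod_upper_bound i n ltac:(lia)).
    specialize (Hth z hzth).
    unfold P. destruct (Nat.lt_ge_cases (S (i mod n)) n) as [h|h].
    + rewrite (h1 h). simpl (S (i mod n) =? 0)%nat.
      destruct (i mod n =? 0)%nat eqn:E.
      * apply Nat.eqb_eq in E. rewrite E. simpl. lra.
      * rewrite <- iter_S, d0. auto.
    + rewrite h2 by lia. simpl (0 =? 0)%nat.
      destruct (i mod n =? 0)%nat eqn:E.
      * apply Nat.eqb_eq in E. assert (n = 1%nat) by lia. subst n. simpl in hzn.
        pose proof (dtri (f x) (f z) x). rewrite (dsym (f z) x) in H0. lra.
      * rewrite <- iter_S. replace (S (i mod n)) with n by lia. rewrite dsym. lra.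
Qed.

Lemma construct : forall x, nonwandering d f x -> forall eps, eps > 0 ->
  exists w (p : nat -> nat) (ek : nat -> R),
    d x w < eps /\ (forall k, (p k >= 1)%nat) /\ (forall k, Nat.divide (p k) (p (S k))) /\
    (forall eta, eta > 0 -> exists K, forall k, (k >= K)%nat -> ek k < eta) /\
    (forall k i j, (i mod p k = j mod p k)%nat -> d (iter f i w) (iter f j w) <= ek k).
Proof.
  intros x Hx eps heps.
  destruct (initial_stage x Hx (eps / 4) ltac:(lra)) as [s0 [Hs0 [Hx0 Hg0]]].
  destruct (dep_choice stage valid srel s0 Hs0 next_stage) as [sq [Hsq0 Hsq]].
  set (g0 := eps / 4).
  assert (Hg : forall k, sg (sq k) = g0 * (/ 2) ^ k).
  { induction k. - rewrite Hsq0, Hg0. simpl. unfold g0. lra.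
    - destruct (Hsq k) as [_ [_ [h _]]]. rewrite h, IHk. simpl. lra. }
  assert (Hgpos : forall k, sg (sq k) > 0) by (intro k; apply (Hsq k)).
  assert (Hcauchy : forall k j i, d (sP (sq k) i) (sP (sq (j + k)%nat) i) <= 2 * sg (sq k) - 2 * sg (sq (j + k)%nat)).
  { intros k j i. induction j. - simpl. rewrite d0. lra.
    - simpl (S j + k)%nat. destruct (Hsq (j + k)%nat) as [_ [_ [h1 h2]]].
      specialize (h2 i). rewrite dsym in h2.
      pose proof (dtri (sP (sq k) i) (sP (sq (j + k)%nat) i) (sP (sq (S (j + k))) i)). lra. }
  assert (HQ : forall i, exists c, forall k, d (sP (sq k) i) c <= 2 * sg (sq k)).
  { intro i. destruct (cluster (fun k => sP (sq k) i)) as [c Hc]. exists c. intro k.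
    apply le_eps. intros eta heta. destruct (Hc eta heta k) as [n [hn hcn]].
    specialize (Hcauchy k (n - k)%nat i). replace (n - k + k)%nat with n in Hcauchy by lia.
    pose proof (dtri (sP (sq k) i) (sP (sq n) i) c). rewrite dsym in hcn.
    pose proof (Hgpos n). lra. }
  set (Q := fun i => proj1_sig (constructive_indefinite_description _ (HQ i))).
  assert (HQk : forall i k, d (sP (sq k) i) (Q i) <= 2 * sg (sq k)).
  { intro i. exact (proj2_sig (constructive_indefinite_description _ (HQ i))). }
  clearbody Q.
  assert (Hsmall : forall eta, eta > 0 -> exists K, forall k, (k >= K)%nat -> sg (sq k) < eta).
  { intros eta heta. destruct (pow_lt_1_zero (/ 2) ltac:(rewrite Rabs_pos_eq; lra) (eta / g0))
      as [K HK]. { apply Rdiv_lt_0_compat; unfold g0; lra. }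
    exists K. intros k hk. specialize (HK k hk). rewrite Rabs_pos_eq in HK.
    2:{ apply pow_le. lra. }
    rewrite Hg. unfold g0 in *. apply Rmult_lt_compat_l with (r := eps / 4) in HK; [|lra].
    replace (eps / 4 * (eta / (eps / 4))) with eta in HK by (field; lra). lra. }
  assert (HQS : forall i, Q (S i) = f (Q i)).
  { intro i. apply d_small_eq. intros eta heta.
    destruct (Hf (Q i) (eta / 2) ltac:(lra)) as [th [hth Hth]].
    destruct (Hsmall (Rmin (th / 2) (eta / 8)) ltac:(apply Rmin_glb_lt; lra)) as [K HK].
    specialize (HK K (le_n K)). pose proof (Rmin_l (th / 2) (eta / 8)). pose proof (Rmin_r (th / 2) (eta / 8)).
    destruct (Hsq K) as [[_ [_ [_ [_ [heg [_ Herr]]]]]] _].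
    specialize (Herr i). pose proof (HQk i K) as A1. pose proof (HQk (S i) K) as A2.
    assert (A3 : d (f (Q i)) (f (sP (sq K) i)) < eta / 2) by (apply Hth; rewrite dsym; lra).
    pose proof (dtri (Q (S i)) (sP (sq K) (S i)) (f (sP (sq K) i))) as A4.
    pose proof (dtri (Q (S i)) (f (sP (sq K) i)) (f (Q i))) as A5.
    rewrite (dsym (Q (S i)) (sP (sq K) (S i))) in A4.
    rewrite (dsym (sP (sq K) (S i)) (f (sP (sq K) i))) in A4.
    rewrite (dsym (f (sP (sq K) i)) (f (Q i))) in A5. lra. }
  assert (HQi : forall i, Q i = iter f i (Q 0%nat)).
  { induction i; auto. rewrite HQS, IHi. reflexivity. }
  exists (Q 0%nat), (fun k => sp (sq k)), (fun k => 4 * sg (sq k)).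
  split; [|split; [|split; [|split]]].
  - pose proof (HQk 0%nat 0%nat). rewrite Hsq0, Hx0, Hg0 in H. lra.
  - intro k. apply (Hsq k).
  - intro k. apply (Hsq k).
  - intros eta heta. destruct (Hsmall (eta / 4) ltac:(lra)) as [K HK]. exists K.
    intros k hk. specialize (HK k hk). lra.
  - intros k i j hij. rewrite <- !HQi.
    destruct (Hsq k) as [[_ [HP _]] _].
    assert (sP (sq k) i = sP (sq k) j) by (rewrite (HP i), (HP j), hij; reflexivity).
    pose proof (HQk i k). pose proof (HQk j k).
    pose proof (dtri (Q i) (sP (sq k) i) (Q j)). rewrite H in H2, H0.
    rewrite dsym in H0. lra.
Qed.

Lemma fin_min : forall (A : nat -> R -> Prop) n,
  (forall r th th', 0 < th' -> th' <= th -> A r th -> A r th') ->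
  (forall r, (r < n)%nat -> exists th, th > 0 /\ A r th) ->
  exists th, th > 0 /\ forall r, (r < n)%nat -> A r th.
Proof.
  intros A n Hm. induction n; intros H.
  - exists 1. split; [lra|]. intros r hr; lia.
  - destruct IHn as [t1 [ht1 H1]]. { intros r hr. apply H. lia. }
    destruct (H n (Nat.lt_succ_diag_r n)) as [t2 [ht2 H2]].
    assert (hm : Rmin t1 t2 > 0) by (apply Rmin_glb_lt; auto).
    exists (Rmin t1 t2). split; auto.
    intros r hr. destruct (Nat.eq_dec r n) as [->|hne].
    + apply Hm with t2; auto. apply Rmin_r.
    + apply Hm with t1; auto. apply Rmin_l. apply H1. lia.
Qed.

Lemma exists_min : forall P : nat -> Prop, (exists n, P n) -> exists n, P n /\ forall m, P m -> (n <= m)%nat.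
Proof.
  intros P [n Hn]. revert Hn. induction n as [n IH] using lt_wf_ind. intros Hn.
  destruct (classic (exists m, P m /\ (m < n)%nat)) as [[m [hm hlt]]|hno].
  - apply (IH m hlt hm).
  - exists n. split; auto. intros m hm. destruct (Nat.le_gt_cases n m) as [h|h]; auto.
    exfalso. apply hno. exists m; split; auto.
Qed.

Lemma mod_add_congr : forall i r t n, (i mod n = r mod n)%nat -> ((i + t) mod n = (r + t) mod n)%nat.
Proof.
  intros i r t n H. rewrite (Nat.Div0.add_mod i t), (Nat.Div0.add_mod r t), H. reflexivity.
Qed.

Lemma mod_cancel : forall x y n, (n >= 1)%nat -> ((x + y) mod n = y mod n)%nat -> (x mod n = 0)%nat.
Proof.
  intros x y n hn H. rewrite Nat.Div0.add_mod in H.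
  pose proof (Nat.mod_upper_bound x n ltac:(lia)). pose proof (Nat.mod_upper_bound y n ltac:(lia)).
  set (x1 := (x mod n)%nat) in *. set (y1 := (y mod n)%nat) in *.
  destruct (Nat.lt_ge_cases (x1 + y1) n) as [h|h].
  - rewrite Nat.mod_small in H by auto. lia.
  - replace (x1 + y1)%nat with ((x1 + y1 - n) + 1 * n)%nat in H by lia.
    rewrite Nat.Div0.mod_add, Nat.mod_small in H by lia. lia.
Qed.

Lemma divide_sub_mod : forall D r s, (D >= 1)%nat -> (r <= s)%nat ->
  (Nat.divide D (s - r) <-> (r mod D = s mod D)%nat).
Proof.
  intros D r s hD hrs. split.
  - intros [q hq]. replace s with (r + q * D)%nat by lia. rewrite Nat.Div0.mod_add. reflexivity.
  - intros H. pose proof (Nat.div_mod_eq r D). pose proof (Nat.div_mod_eq s D).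
    exists (s / D - r / D)%nat. rewrite Nat.mul_sub_distr_r.
    rewrite (Nat.mul_comm (s / D)), (Nat.mul_comm (r / D)). lia.
Qed.

Lemma divide_fact : forall B a, (1 <= a)%nat -> (a <= B)%nat -> Nat.divide a (fact B).
Proof.
  induction B; intros a h1 h2. - lia.
  - replace (fact (S B)) with (S B * fact B)%nat by reflexivity.
    destruct (Nat.eq_dec a (S B)) as [->|hne].
    + exists (fact B). ring.
    + apply Nat.divide_mul_r. apply IHB; lia.
Qed.

Section Classify.
Variable w : X.
Variable p : nat -> nat.
Variable ek : nat -> R.
Hypothesis Hp1 : forall k, (p k >= 1)%nat.
Hypothesis Hdiv : forall k, Nat.divide (p k) (p (S k)).
Hypothesis Hek : forall eta, eta > 0 -> exists K, forall k, (k >= K)%nat -> ek k < eta.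
Hypothesis Hreg : forall k i j, (i mod p k = j mod p k)%nat -> d (iter f i w) (iter f j w) <= ek k.

Let Q i := iter f i w.
Let K z := orbit_closure d f w z.

Lemma pdiv_le : forall k m, (k <= m)%nat -> Nat.divide (p k) (p m).
Proof.
  intros k m h. induction h. - apply Nat.divide_refl.
  - eapply Nat.divide_trans; eauto.
Qed.

Lemma mod_down : forall k m i j, (k <= m)%nat -> (i mod p m = j mod p m)%nat -> (i mod p k = j mod p k)%nat.
Proof.
  intros k m i j h H. rewrite <- (mod_mod_div i (p m) (p k)), <- (mod_mod_div j (p m) (p k)), H by (apply pdiv_le; auto).
  reflexivity.
Qed.

Definition cl k r z := forall eta, eta > 0 -> exists i, (i mod p k = r mod p k)%nat /\ d z (Q i) < eta.

Lemma cl_Q : forall k i r, (i mod p k = r mod p k)%nat -> cl k r (Q i).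
Proof. intros k i r H eta heta. exists i. split; auto. rewrite d0. auto. Qed.

Lemma cl_congr : forall k r s z, (r mod p k = s mod p k)%nat -> cl k r z -> cl k s z.
Proof. intros k r s z H Hc eta heta. destruct (Hc eta heta) as [i [h1 h2]]. exists i. split; auto. congruence. Qed.

Lemma cl_shift : forall k r t z, cl k r z -> cl k (r + t) (iter f t z).
Proof.
  intros k r t z H eta heta. destruct (cont_iter t z eta heta) as [th [hth Hth]].
  destruct (H th hth) as [i [h1 h2]]. exists (t + i)%nat. split.
  - rewrite Nat.add_comm. apply mod_add_congr; auto.
  - unfold Q. rewrite iter_add. apply Hth. auto.
Qed.

Lemma cl_down : forall k m r z, (k <= m)%nat -> cl m r z -> cl k r z.
Proof.
  intros k m r z h H eta heta. destruct (H eta heta) as [i [h1 h2]]. exists i. split; auto.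
  apply (mod_down k m); auto.
Qed.

Lemma cl_dist : forall k r z u, cl k r z -> cl k r u -> d z u <= ek k.
Proof.
  intros k r z u Hz Hu. apply le_eps. intros eta heta.
  destruct (Hz (eta / 2) ltac:(lra)) as [i [hi1 hi2]]. destruct (Hu (eta / 2) ltac:(lra)) as [j [hj1 hj2]].
  assert (Hij : d (Q i) (Q j) <= ek k) by (apply Hreg; congruence).
  pose proof (dtri z (Q i) u). pose proof (dtri (Q i) (Q j) u). rewrite (dsym (Q j) u) in H0. lra.
Qed.

Lemma cl_closed : forall k r z, (forall eta, eta > 0 -> exists u, cl k r u /\ d z u < eta) -> cl k r z.
Proof.
  intros k r z H eta heta. destruct (H (eta / 2) ltac:(lra)) as [u [Hu hu]].
  destruct (Hu (eta / 2) ltac:(lra)) as [i [h1 h2]]. exists i. split; auto.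
  pose proof (dtri z u (Q i)). lra.
Qed.

Lemma cl_key : forall k r s c u, cl k r c -> cl k s c -> cl k s u -> cl k r u.
Proof.
  intros k r s c u Hr Hs Hu eta heta.
  destruct (Hek (eta / 4) ltac:(lra)) as [K0 HK0].
  set (m := Nat.max k K0). assert (hkm : (k <= m)%nat) by lia.
  assert (hem : ek m < eta / 4) by (apply HK0; lia).
  destruct (fin_min (fun n th => forall y, d c y < th -> d (iter f n c) (iter f n y) < eta / 4) (p m))
    as [th [hth Hth]].
  { intros n t t' h1 h2 H y hy. apply H. lra. }
  { intros n hn. destruct (cont_iter n c (eta / 4) ltac:(lra)) as [t [ht Ht]]. exists t. auto. }
  destruct (Hu (eta / 4) ltac:(lra)) as [b [hb1 hb2]].
  destruct (Hs th hth) as [b' [hb'1 hb'2]].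
  destruct (Hr th hth) as [a' [ha'1 ha'2]].
  pose proof (Hp1 m) as hpm. pose proof (Hp1 k) as hpk.
  set (rb := (b' mod p m)%nat).
  assert (hrb : (rb < p m)%nat) by (apply Nat.mod_upper_bound; lia).
  set (n := ((b + (p m - rb)) mod p m)%nat).
  assert (hn : (n < p m)%nat) by (apply Nat.mod_upper_bound; lia).
  assert (Hnb : ((n + b') mod p m = b mod p m)%nat).
  { unfold n. rewrite Nat.Div0.add_mod_idemp_l.
    pose proof (Nat.div_mod_eq b' (p m)). fold rb in H.
    replace (b + (p m - rb) + b')%nat with (b + (b' / p m + 1) * p m)%nat by nia.
    apply Nat.Div0.mod_add. }
  assert (Hn0 : (n mod p k = 0)%nat).
  { apply (mod_cancel n b' (p k)); auto.
    rewrite (mod_down k m _ _ hkm Hnb). congruence. }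
  exists (n + a')%nat. split.
  - rewrite Nat.Div0.add_mod, Hn0, Nat.add_0_l, Nat.Div0.mod_mod. auto.
  - specialize (Hth n hn). pose proof (Hth _ hb'2) as E1. pose proof (Hth _ ha'2) as E2.
    unfold Q in *. rewrite <- iter_add in E1, E2.
    assert (E3 : d (iter f (n + b') w) (iter f b w) <= ek m) by (apply Hreg; auto).
    set (Qb := iter f b w) in *. set (Qnb := iter f (n + b') w) in *.
    set (Qna := iter f (n + a') w) in *. set (cn := iter f n c) in *.
    pose proof (dtri u Qb Qna) as T1. pose proof (dtri Qb Qnb Qna) as T2.
    pose proof (dtri Qnb cn Qna) as T3. pose proof (dsym Qb Qnb) as S1.
    pose proof (dsym Qnb cn) as S2. lra.
Qed.

Definition rel k r s := exists c, cl k r c /\ cl k s c.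

Lemma rel_refl : forall k r, rel k r r.
Proof. intros k r. exists (Q r). split; apply cl_Q; auto. Qed.
Lemma rel_sym : forall k r s, rel k r s -> rel k s r.
Proof. intros k r s [c [h1 h2]]. exists c; auto. Qed.
Lemma rel_cl : forall k r s u, rel k r s -> cl k s u -> cl k r u.
Proof. intros k r s u [c [h1 h2]] H. eapply cl_key; eauto. Qed.
Lemma rel_trans : forall k r s t, rel k r s -> rel k s t -> rel k r t.
Proof.
  intros k r s t H1 [c [h1 h2]]. exists c. split; auto. eapply rel_cl; eauto.
Qed.
Lemma rel_shift : forall k r s t, rel k r s -> rel k (r + t) (s + t).
Proof. intros k r s t [c [h1 h2]]. exists (iter f t c). split; apply cl_shift; auto. Qed.
Lemma rel_congr : forall k r s r' s', (r mod p k = r' mod p k)%nat -> (s mod p k = s' mod p k)%nat ->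
  rel k r s -> rel k r' s'.
Proof. intros k r s r' s' h1 h2 [c [c1 c2]]. exists c. split; eapply cl_congr; eauto. Qed.
Lemma rel_unshift : forall k r s t, rel k (r + t) (s + t) -> rel k r s.
Proof.
  intros k r s t H. pose proof (Hp1 k).
  apply (rel_shift k _ _ (p k * t - t)) in H.
  apply (rel_congr k _ _ r s) in H; auto.
  - replace (r + t + (p k * t - t))%nat with (r + t * p k)%nat by nia. apply Nat.Div0.mod_add.
  - replace (s + t + (p k * t - t))%nat with (s + t * p k)%nat by nia. apply Nat.Div0.mod_add.
Qed.

Definition Gk k t := rel k 0 t.
Lemma G_p : forall k, Gk k (p k).
Proof.
  intro k. unfold Gk. apply (rel_congr k 0 0); [reflexivity| |apply rel_refl].
  rewrite Nat.Div0.mod_same, Nat.Div0.mod_0_l. reflexivity.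
Qed.
Lemma G_add : forall k t u, Gk k t -> Gk k u -> Gk k (t + u).
Proof.
  intros k t u Ht Hu. unfold Gk in *. apply rel_trans with t; auto.
  apply (rel_shift k 0 u t) in Hu. rewrite Nat.add_0_l, Nat.add_comm in Hu. auto.
Qed.
Lemma G_sub : forall k t u, Gk k t -> Gk k (t + u) -> Gk k u.
Proof.
  intros k t u Ht Htu. unfold Gk in *. apply (rel_unshift k 0 u t).
  rewrite Nat.add_0_l, Nat.add_comm. apply rel_trans with 0%nat; auto. apply rel_sym; auto.
Qed.
Lemma G_mul : forall k t q, Gk k t -> Gk k (q * t).
Proof.
  intros k t q H. induction q. - apply rel_refl.
  - replace (S q * t)%nat with (t + q * t)%nat by ring. apply G_add; auto.
Qed.

Lemma D_exists : forall k, exists D, (D >= 1)%nat /\ Gk k D /\ forall t, (t >= 1)%nat -> Gk k t -> (D <= t)%nat.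
Proof.
  intro k. assert (HE : exists t, (t >= 1)%nat /\ Gk k t).
  { exists (p k). split; [apply Hp1|apply G_p]. }
  destruct (exists_min (fun t => (t >= 1)%nat /\ Gk k t) HE) as [D [[h1 h2] h3]].
  exists D. repeat split; auto.
Qed.

Definition Df k := proj1_sig (constructive_indefinite_description _ (D_exists k)).
Lemma Df_spec : forall k, (Df k >= 1)%nat /\ Gk k (Df k) /\ forall t, (t >= 1)%nat -> Gk k t -> (Df k <= t)%nat.
Proof. intro k. exact (proj2_sig (constructive_indefinite_description _ (D_exists k))). Qed.

Lemma G_iff : forall k t, Gk k t <-> Nat.divide (Df k) t.
Proof.
  intros k t. destruct (Df_spec k) as [h1 [h2 h3]]. split.
  - intro H. pose proof (Nat.div_mod_eq t (Df k)) as E.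
    assert (Gk k (t mod Df k)).
    { apply (G_sub k (Df k * (t / Df k))). - rewrite Nat.mul_comm. apply G_mul; auto.
      - rewrite <- E. auto. }
    destruct (Nat.eq_dec (t mod Df k) 0) as [h|h].
    + apply Nat.Lcm0.mod_divide. auto.
    + exfalso. specialize (h3 (t mod Df k)%nat ltac:(lia) H0). pose proof (Nat.mod_upper_bound t (Df k) ltac:(lia)). lia.
  - intros [q ->]. apply G_mul; auto.
Qed.

Lemma rel_iff : forall k r s, rel k r s <-> (r mod Df k = s mod Df k)%nat.
Proof.
  assert (H : forall k r s, (r <= s)%nat -> (rel k r s <-> (r mod Df k = s mod Df k)%nat)).
  { intros k r s hrs. destruct (Df_spec k) as [h1 _].
    rewrite <- divide_sub_mod by auto. rewrite <- G_iff. unfold Gk. split; intro H.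
    - apply (rel_unshift k 0 (s - r) r). rewrite Nat.add_0_l. replace (s - r + r)%nat with s by lia. auto.
    - apply (rel_shift k 0 (s - r) r) in H. rewrite Nat.add_0_l in H. replace (s - r + r)%nat with s in H by lia. auto. }
  intros k r s. destruct (Nat.le_gt_cases r s) as [h|h].
  - apply H; auto.
  - split; intro H1.
    + symmetry. apply H; [lia|]. apply rel_sym; auto.
    + apply rel_sym. apply H; [lia|]. auto.
Qed.

Lemma Df_div : forall k m, (k <= m)%nat -> Nat.divide (Df k) (Df m).
Proof.
  intros k m h. apply G_iff. destruct (Df_spec m) as [_ [[c [c1 c2]] _]].
  exists c. split; apply (cl_down k m); auto.
Qed.

Lemma Df_le : forall k m, (k <= m)%nat -> (Df k <= Df m)%nat.
Proof.
  intros k m h. apply Nat.divide_pos_le; [|apply Df_div; auto]. destruct (Df_spec m). lia.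
Qed.

Lemma K_cl : forall k z, K z -> exists r, cl k r z.
Proof.
  intros k z Hz. apply NNPP. intro Hn.
  destruct (fin_min (fun r th => forall i, (i mod p k = r mod p k)%nat -> th <= d z (Q i)) (p k)) as [th [hth Hth]].
  { intros r t t' h1 h2 H i hi. specialize (H i hi). lra. }
  { intros r hr. apply NNPP. intro H1. apply Hn. exists r. intros eta heta. apply NNPP. intro H2.
    apply H1. exists eta. split; auto. intros i hi. apply Rnot_lt_le. intro h. apply H2. exists i. auto. }
  destruct (Hz th hth) as [n hn].
  assert (hr : (n mod p k < p k)%nat) by (apply Nat.mod_upper_bound; pose proof (Hp1 k); lia).
  specialize (Hth _ hr n (eq_sym (Nat.Div0.mod_mod n (p k)))). unfold Q in Hth. lra.
Qed.

Lemma K_f : forall z, K z -> K (f z).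
Proof.
  intros z Hz e he. destruct (Hf z e he) as [th [hth Hth]]. destruct (Hz th hth) as [n hn].
  exists (S n). apply Hth. auto.
Qed.

Lemma K_sep : forall k r z, cl k r z -> exists th, th > 0 /\ forall u, K u -> d z u < th -> cl k r u.
Proof.
  intros k r z Hz.
  destruct (fin_min (fun s th => ~ rel k r s -> forall u, cl k s u -> th <= d z u) (p k)) as [th [hth Hth]].
  { intros s t t' h1 h2 H hn u hu. specialize (H hn u hu). lra. }
  { intros s hs. destruct (classic (rel k r s)) as [hr|hr].
    - exists 1. split; [lra|]. intro; contradiction.
    - assert (~ cl k s z) by (intro h; apply hr; exists z; auto).
      apply NNPP. intro H1. apply H. apply cl_closed. intros eta heta. apply NNPP. intro H2.
      apply H1. exists eta. split; auto. intros _ u hu. apply Rnot_lt_le. intro h. apply H2. exists u. auto. }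
  exists th. split; auto. intros u Hu hzu.
  destruct (K_cl k u Hu) as [s0 Hs0].
  assert (hs : (s0 mod p k < p k)%nat) by (apply Nat.mod_upper_bound; pose proof (Hp1 k); lia).
  assert (Hs : cl k (s0 mod p k) u) by (eapply cl_congr; [|eauto]; symmetry; apply Nat.Div0.mod_mod).
  destruct (classic (rel k r (s0 mod p k))) as [hr|hr].
  - eapply rel_cl; eauto.
  - specialize (Hth _ hs hr u Hs). lra.
Qed.

Lemma w_nonwandering : nonwandering d f w.
Proof.
  intros U HU Uw. destruct (HU w Uw) as [r [hr Hr]].
  destruct (Hek r hr) as [k Hk]. specialize (Hk k (le_n k)).
  exists (p k). split; [apply Hp1|]. exists w. split; auto. apply Hr.
  assert (d (Q 0%nat) (Q (p k)) <= ek k).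
  { apply Hreg. rewrite Nat.Div0.mod_0_l, Nat.Div0.mod_same. reflexivity. }
  unfold Q in H. simpl in H. lra.
Qed.

Lemma classify : periodic f w \/ exists m, odometer_seq m /\ conj_to_odometer d f w m.
Proof.
  destruct (classic (exists B, forall k, (Df k <= B)%nat)) as [[B HB]|HB].
  - left. exists (fact B). split; [pose proof (lt_O_fact B); lia|].
    symmetry. apply d_small_eq. intros eta heta.
    destruct (Hek eta heta) as [K0 HK0]. specialize (HK0 K0 (le_n K0)).
    assert (HG : Gk K0 (fact B)).
    { apply G_iff. apply divide_fact; [apply Df_spec|apply HB]. }
    assert (Hw : cl K0 (fact B) w).
    { apply (rel_cl K0 (fact B) 0%nat); [apply rel_sym; apply HG|]. apply (cl_Q K0 0 0); auto. }
    assert (HQ : cl K0 (fact B) (Q (fact B))) by (apply cl_Q; auto).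
    pose proof (cl_dist _ _ _ _ Hw HQ). unfold Q in H. lra.
  - right.
    assert (Hub : forall B, exists k, (Df k > B)%nat).
    { intro B. apply NNPP. intro H. apply HB. exists B. intro k. apply Nat.nlt_ge. intro h. apply H. exists k. auto. }
    set (pick := fun B => proj1_sig (constructive_indefinite_description _ (Hub B))).
    assert (Hpick : forall B, (Df (pick B) > B)%nat).
    { intro B. exact (proj2_sig (constructive_indefinite_description _ (Hub B))). }
    clearbody pick.
    set (kk := fun j => Nat.iter j (fun k => pick (Df k)) (pick 1%nat)).
    assert (Hkk0 : (Df (kk 0%nat) > 1)%nat) by apply Hpick.
    assert (HkkS : forall j, (Df (kk (S j)) > Df (kk j))%nat) by (intro j; apply Hpick).
    assert (Hkklt : forall j, (kk j < kk (S j))%nat).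
    { intro j. destruct (Nat.lt_ge_cases (kk j) (kk (S j))) as [h|h]; auto.
      apply Df_le in h. specialize (HkkS j). lia. }
    assert (Hkkmono : forall j l, (j <= l)%nat -> (kk j <= kk l)%nat).
    { intros j l h. induction h; auto. specialize (Hkklt m). lia. }
    assert (Hkkge : forall j, (kk j >= j)%nat).
    { induction j; [lia|]. specialize (Hkklt j). lia. }
    set (m := fun j => Df (kk j)).
    assert (Hm1 : forall j, (m j >= 1)%nat) by (intro j; apply Df_spec).
    assert (Hmdiv : forall j l, (j <= l)%nat -> Nat.divide (m j) (m l)).
    { intros j l h. apply Df_div. auto. }
    exists m. split.
    { split; [apply Hkk0|]. intro k. split; [apply HkkS|apply Hmdiv; lia]. }
    unfold conj_to_odometer. cbv zeta.
    set (h := fun z j => ((epsilon (inhabits 0%nat) (fun r => cl (kk j) r z)) mod m j)%nat).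
    assert (Hh : forall z j r, K z -> cl (kk j) r z -> h z j = (r mod m j)%nat).
    { intros z j r Hz Hr. unfold h.
      pose proof (epsilon_spec (inhabits 0%nat) (fun r => cl (kk j) r z) (K_cl (kk j) z Hz)) as He.
      simpl in He. apply (rel_iff (kk j)). exists z. auto. }
    assert (Hsame : forall z u j r, cl (kk j) r z -> K u -> h u j = (r mod m j)%nat -> cl (kk j) r u).
    { intros z u j r Hz Hu Heq. destruct (K_cl (kk j) u Hu) as [s Hs].
      rewrite (Hh u j s Hu Hs) in Heq. apply (rel_cl _ r s); auto.
      apply rel_iff. auto. }
    exists h. split; [|split; [|split; [|split; [|split]]]].
    +
      intros z Hz k. split.
      * unfold h. apply Nat.mod_upper_bound. specialize (Hm1 k). lia.
      * destruct (K_cl (kk (S k)) z Hz) as [r Hr].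
        rewrite (Hh z (S k) r Hz Hr).
        rewrite (Hh z k r Hz (cl_down _ _ _ _ (Hkkmono k (S k) ltac:(lia)) Hr)).
        apply mod_mod_div. apply Hmdiv; lia.
    +
      intros pp Hpp.
      assert (Hpl : forall j l, (j <= l)%nat -> (pp l mod m j = pp j)%nat).
      { intros j l hjl. induction hjl.
        - apply Nat.mod_small. apply Hpp.
        - rewrite <- (mod_mod_div (pp (S m0)) (m m0) (m j)) by (apply Hmdiv; auto).
          destruct (Hpp m0) as [_ E]. rewrite E. auto. }
      assert (Hcl : forall j l, (j <= l)%nat -> cl (kk j) (pp j) (Q (pp l))).
      { intros j l hjl. apply (rel_cl _ (pp j) (pp l)); [|apply cl_Q; auto].
        apply rel_iff. fold (m j). rewrite (Hpl j l hjl). rewrite Nat.mod_small; auto. apply Hpp. }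
      destruct (cluster (fun l => Q (pp l))) as [c Hc].
      assert (HKc : K c).
      { intros e he. destruct (Hc e he 0%nat) as [n [_ hn]]. exists (pp n). auto. }
      exists c. split; auto. intro j.
      assert (Hcj : cl (kk j) (pp j) c).
      { apply cl_closed. intros eta heta. destruct (Hc eta heta j) as [n [hn hcn]].
        exists (Q (pp n)). split; auto. }
      rewrite (Hh c j (pp j) HKc Hcj). apply Nat.mod_small. apply Hpp.
    +
      intros z u Hz Hu Heq. apply d_small_eq. intros eta heta.
      destruct (Hek eta heta) as [K0 HK0].
      destruct (K_cl (kk K0) z Hz) as [r Hr].
      assert (Hru : cl (kk K0) r u) by (apply (Hsame z u K0 r Hr Hu); rewrite <- Heq; apply Hh; auto).
      pose proof (cl_dist _ _ _ _ Hr Hru). specialize (HK0 (kk K0) (Hkkge K0)). lra.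
    +
      intros z N Hz.
      destruct (fin_min (fun j th => forall u, K u -> d z u < th -> h u j = h z j) N) as [th [hth Hth]].
      { intros j t t' h1 h2 H u hu hd. apply H; auto. lra. }
      { intros j hj. destruct (K_cl (kk j) z Hz) as [r Hr].
        destruct (K_sep (kk j) r z Hr) as [th [hth Hth]]. exists th. split; auto.
        intros u Hu hd. rewrite (Hh z j r Hz Hr). apply Hh; auto. }
      exists th. split; [exact hth|intros u Hu hd k hk; apply Hth; auto].
    +
      intros z eps Hz heps. destruct (Hek eps heps) as [K0 HK0]. exists (S K0).
      intros u Hu Heq. destruct (K_cl (kk K0) z Hz) as [r Hr].
      assert (Hru : cl (kk K0) r u).
      { apply (Hsame z u K0 r Hr Hu). rewrite Heq by lia. apply Hh; auto. }
      pose proof (cl_dist _ _ _ _ Hr Hru). specialize (HK0 (kk K0) (Hkkge K0)). lra.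
    +
      intros z Hz k. destruct (K_cl (kk k) z Hz) as [r Hr].
      assert (Hfr : cl (kk k) (r + 1)%nat (f z)) by (apply (cl_shift _ _ 1 z Hr)).
      rewrite (Hh (f z) k (r + 1)%nat (K_f z Hz) Hfr). unfold odometer_map.
      rewrite (Hh z k r Hz Hr). rewrite Nat.Div0.add_mod_idemp_l. reflexivity.
Qed.
End Classify.
End S.

Theorem corollary1p1 (X : Type) (d : X -> X -> R) (f : X -> X)
  (Hd : is_metric d) (HX : metric_compact d) (Hf : metric_continuous d f)
  (Hls : limit_shadowing d f) :
  forall x, nonwandering d f x ->
  forall eps, eps > 0 ->
  exists y, nonwandering d f y /\ d x y < eps /\
    (periodic f y \/
     exists m : nat -> nat, odometer_seq m /\ conj_to_odometer d f y m).
Proof.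
  intros x Hx eps heps.
  destruct (construct X d f Hd HX Hf Hls x Hx eps heps) as [w [p [ek [h1 [h2 [h3 [h4 h5]]]]]]].
  exists w. split; [|split; auto].
  - eapply w_nonwandering; eauto.
  - eapply classify; eauto.
Qed.
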